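(* Let $a\in\mathbb{R}$, $\gamma\in[0,1]$, $f:\mathbb{N}_a\to\mathbb{R}$, and $\alpha_1,\alpha_2,\beta_1,\beta_2>0$. Then for all $t\in\mathbb{N}_a$, $$\Bigl({}_\gamma\diamondsuit_a^{-\alpha_1,-\beta_1}\bigl({}_\gamma\diamondsuit_a^{-\alpha_2,-\beta_2}f\bigr)\Bigr)(t)=\gamma\bigl({}_\gamma\diamondsuit_a^{-(\alpha_1+\alpha_2),-(\beta_1+\alpha_2)}f\bigr)(t)+(1-\gamma)\bigl({}_\gamma\diamondsuit_a^{-(\alpha_1+\beta_2),-(\beta_1+\beta_2)}f\bigr)(t).$$
   Context: $\mathbb{N}_a=\{a,a+1,a+2,\dots\}$, $\sigma(s)=s+1$, $\rho(s)=s-1$. Falling factorial $x^{(y)}:=\Gamma(x+1)/\Gamma(x+1-y)$; rising factorial $x^{\overline{y}}:=\Gamma(x+y)/\Gamma(x)$. For $g:\mathbb{N}_a\to\mathbb{R}$ and $\alpha>0$: $(\Delta_a^{-\alpha}g)(t+\alpha)=\frac{1}{\Gamma(\alpha)}\sum_{s=a}^{t}(t+\alpha-\sigma(s))^{(\alpha-1)}g(s)$ and $(\nabla_a^{-\beta}g)(t)=\frac{1}{\Gamma(\beta)}\sum_{s=a}^{t}(t-\rho(s))^{\overline{\beta-1}}g(s)$, $t\in\mathbb{N}_a$. The diamond-$\gamma$ fractional operator of order $(\alpha,\beta)$ is $({}_\gamma\diamondsuit_a^{-\alpha,-\beta}g)(t)=\gamma(\Delta_a^{-\alpha}g)(t+\alpha)+(1-\gamma)(\nabla_a^{-\beta}g)(t)$,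 a function on $\mathbb{N}_a$. *)

(* Defs.v *)
From Stdlib Require Import Arith Factorial Reals Rprod ClassicalEpsilon.
Open Scope R_scope.

(* Gamma function for x > 0, via Gauss's limit definition:
   Gamma x = lim_{n->oo} n! n^x / (x (x+1) ... (x+n)).
   (Only used at positive arguments; its value elsewhere is irrelevant.) *)
Definition gauss_seq (x : R) (n : nat) : R :=
  INR (fact n) * Rpower (INR n) x / prod_f_R0 (fun i => x + INR i) n.

Definition Gamma (x : R) : R :=
  epsilon (inhabits 0) (fun l => Un_cv (gauss_seq x) l).

Definition falling (x y : R) : R := Gamma (x + 1) / Gamma (x + 1 - y).
Definition rising (x y : R) : R := Gamma (x + y) / Gamma x.

Definition sigma (s : R) : R := s + 1.
Definition rho (s : R) : R := s - 1.

(* A function g : N_a -> R is represented as g : nat -> R, with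
   g k standing for the value at the point a + k of N_a. *)

(* (Delta_a^{-alpha} g)(t + alpha), at t = a + k *)
Definition DeltaInv (a alpha : R) (g : nat -> R) (k : nat) : R :=
  / Gamma alpha *
  sum_f_R0 (fun j => falling ((a + INR k) + alpha - sigma (a + INR j)) (alpha - 1) * g j) k.

(* (nabla_a^{-beta} g)(t), at t = a + k *)
Definition NablaInv (a beta : R) (g : nat -> R) (k : nat) : R :=
  / Gamma beta *
  sum_f_R0 (fun j => rising ((a + INR k) - rho (a + INR j)) (beta - 1) * g j) k.

Definition diamond (gam a alpha beta : R) (g : nat -> R) (k : nat) : R :=
  gam * DeltaInv a alpha g k + (1 - gam) * NablaInv a beta g k.

(* Main.v *)
Require Import Defs.
From Stdlib Require Import Reals.
From Stdlib Require Import Lra Lia ClassicalEpsilon Arith Factorial ZArith.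
Open Scope R_scope.

Lemma exp_le' x y : x <= y -> exp x <= exp y.
Proof. intros [H|H]; [left; now apply exp_increasing | subst; lra]. Qed.

Lemma ln_le' x y : 0 < x -> x <= y -> ln x <= ln y.
Proof. intros Hx [H|H]; [left; now apply ln_increasing | subst; lra]. Qed.

Lemma lnB a b : 0 < a -> 0 < b -> ln b - ln a <= b / a - 1.
Proof.
  intros Ha Hb.
  assert (E : b = a * (b / a)) by (field; lra).
  assert (Hq : 0 < b / a) by (apply Rdiv_lt_0_compat; lra).
  rewrite E at 1. rewrite ln_mult; try lra.
  assert (ln (b / a) <= ln (exp (b / a - 1))).
  { apply ln_le'; auto. pose proof (exp_ineq1_le (b/a - 1)). lra. }
  rewrite ln_exp in H. lra.
Qed.

Lemma prod_pos x n : 0 < x -> 0 < prod_f_R0 (fun i => x + INR i) n.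
Proof.
  intros Hx; induction n; cbn [prod_f_R0].
  - simpl INR; lra.
  - apply Rmult_lt_0_compat; auto. pose proof (pos_INR (S n)). lra.
Qed.

Lemma gauss_pos x n : 0 < x -> 0 < gauss_seq x n.
Proof.
  intros Hx. unfold gauss_seq, Rdiv.
  apply Rmult_lt_0_compat. apply Rmult_lt_0_compat.
  apply lt_0_INR, lt_O_fact. unfold Rpower; apply exp_pos.
  apply Rinv_0_lt_compat, prod_pos; auto.
Qed.

Definition Lg (m : nat) := ln (INR (S m)) - ln (INR m).
Definition rr x m := INR (S m) * exp (x * Lg m) / (x + INR (S m)).

Lemma gauss_step x m : 0 < x -> (1 <= m)%nat -> gauss_seq x (S m) = gauss_seq x m * rr x m.
Proof.
  intros Hx Hm. unfold gauss_seq, rr, Rpower, Lg.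
  change (prod_f_R0 (fun i => x + INR i) (S m)) with
    (prod_f_R0 (fun i => x + INR i) m * (x + INR (S m))).
  rewrite fact_simpl, mult_INR.
  replace (x * ln (INR (S m))) with (x * ln (INR m) + x * (ln (INR (S m)) - ln (INR m))) by ring.
  rewrite exp_plus.
  pose proof (prod_pos x m Hx). pose proof (pos_INR (S m)).
  field. split; lra.
Qed.

Lemma rr_ge1 x m : 0 < x -> (1 <= m)%nat -> 1 <= rr x m.
Proof.
  intros Hx Hm. unfold rr, Lg. rewrite S_INR.
  assert (HM : 1 <= INR m) by (apply (le_INR 1); lia).
  pose proof (lnB (INR m + 1) (INR m)) as H. 
  assert (HL : 1 / (INR m + 1) <= ln (INR m + 1) - ln (INR m)).
  { assert (INR m / (INR m + 1) - 1 = - (1 / (INR m + 1))) by (field; lra). lra. }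
  pose proof (exp_ineq1_le (x * (ln (INR m + 1) - ln (INR m)))) as He.
  assert (x * (1 / (INR m + 1)) <= x * (ln (INR m + 1) - ln (INR m))) by
    (apply Rmult_le_compat_l; lra).
  apply Rmult_le_reg_r with (x + (INR m + 1)); [lra|].
  unfold Rdiv. rewrite Rmult_assoc, Rinv_l, Rmult_1_r by lra. rewrite Rmult_1_l.
  assert (E : x + (INR m + 1) = (INR m + 1) * (1 + x * (1 / (INR m + 1)))) by (field; lra).
  rewrite E. apply Rmult_le_compat_l; lra.
Qed.

Lemma rr_up x m : 0 < x -> (1 <= m)%nat ->
  rr x m * exp (x * (1 + x) / INR (S m)) <= exp (x * (1 + x) / INR m).
Proof.
  intros Hx Hm. unfold rr, Lg. rewrite S_INR.
  assert (HM : 1 <= INR m) by (apply (le_INR 1); lia).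
  pose proof (lnB (INR m) (INR m + 1)) as H.
  assert (HL : ln (INR m + 1) - ln (INR m) <= 1 / INR m).
  { assert ((INR m + 1) / INR m - 1 = 1 / INR m) by (field; lra). lra. }
  assert (H1 : exp (x * (ln (INR m + 1) - ln (INR m))) <= exp (x * (1 / INR m))).
  { apply exp_le'. apply Rmult_le_compat_l; lra. }
  pose proof (exp_ineq1_le (- (x / (x + (INR m + 1))))) as H2.
  assert (E2 : 1 + - (x / (x + (INR m + 1))) = (INR m + 1) / (x + (INR m + 1))) by (field; lra).
  rewrite E2 in H2.
  assert (H3 : (INR m + 1) * exp (x * (ln (INR m + 1) - ln (INR m))) / (x + (INR m + 1))
     <= exp (- (x / (x + (INR m + 1)))) * exp (x * (1 / INR m))).
  { unfold Rdiv. rewrite (Rmult_comm (INR m + 1)), Rmult_assoc.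
    rewrite (Rmult_comm (exp _)).
    apply Rmult_le_compat; try lra. 
    - apply Rmult_le_pos; [lra|]. left; apply Rinv_0_lt_compat; lra.
    - left; apply exp_pos. }
  eapply Rle_trans.
  { apply Rmult_le_compat_r. left; apply exp_pos. exact H3. }
  rewrite <- !exp_plus. apply exp_le'.
  assert (D : x * (1 + x) / INR m - (- (x / (x + (INR m + 1))) + x * (1 / INR m) + x * (1 + x) / (INR m + 1))
     = x * (x + 1) * x / (INR m * (INR m + 1) * (x + (INR m + 1)))) by (field; lra).
  assert (0 <= x * (x + 1) * x / (INR m * (INR m + 1) * (x + (INR m + 1)))).
  { apply Rmult_le_pos. apply Rmult_le_pos; [apply Rmult_le_pos|]; lra.
    left; apply Rinv_0_lt_compat. apply Rmult_lt_0_compat; [apply Rmult_lt_0_compat|]; lra. }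
  lra.
Qed.

Lemma cv_shift (u : nat -> R) l : Un_cv (fun n => u (S n)) l -> Un_cv u l.
Proof.
  intros H eps He. destruct (H eps He) as [N HN]. exists (S N).
  intros n Hn. destruct n as [|n]; [lia|]. apply HN. lia.
Qed.

Lemma cv_eventually (u v : nat -> R) l : (forall n, (1 <= n)%nat -> u n = v n) ->
  Un_cv v l -> Un_cv u l.
Proof.
  intros E H eps He. destruct (H eps He) as [N HN]. exists (S N).
  intros n Hn. rewrite E by lia. apply HN. lia.
Qed.

Lemma gauss_bound x p : 0 < x ->
  gauss_seq x (S p) * exp (x * (1 + x) / INR (S p)) <= gauss_seq x 1 * exp (x * (1 + x) / INR 1).
Proof.
  intros Hx. induction p.
  - lra.
  - eapply Rle_trans; [|exact IHp].
    rewrite gauss_step by (auto; lia). rewrite Rmult_assoc.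
    apply Rmult_le_compat_l. left; apply gauss_pos; auto.
    apply rr_up; auto; lia.
Qed.

Lemma gauss_cv x : 0 < x -> exists l, 0 < l /\ Un_cv (gauss_seq x) l.
Proof.
  intros Hx.
  set (u := fun n => gauss_seq x (S n)).
  assert (Hg : Un_growing u).
  { intros n. unfold u. rewrite (gauss_step x (S n)) by (auto; lia).
    pose proof (rr_ge1 x (S n) Hx ltac:(lia)). pose proof (gauss_pos x (S n) Hx).
    rewrite <- (Rmult_1_r (gauss_seq x (S n))) at 1.
    apply Rmult_le_compat_l; lra. }
  assert (Hb : has_ub u).
  { exists (gauss_seq x 1 * exp (x * (1 + x) / INR 1)).
    intros r [n ->]. unfold u. eapply Rle_trans; [|apply gauss_bound; auto].
    pose proof (gauss_pos x (S n) Hx).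
    assert (0 <= x * (1 + x) / INR (S n)).
    { apply Rmult_le_pos. apply Rmult_le_pos; lra. left; apply Rinv_0_lt_compat, lt_0_INR; lia. }
    pose proof (exp_ineq1_le (x * (1 + x) / INR (S n))).
    rewrite <- (Rmult_1_r (gauss_seq x (S n))) at 1.
    apply Rmult_le_compat_l; lra. }
  destruct (growing_cv u Hg Hb) as [l Hl].
  exists l. split.
  - pose proof (growing_ineq u l Hg Hl 0). pose proof (gauss_pos x 1 Hx). unfold u in *. lra.
  - apply cv_shift. exact Hl.
Qed.

Lemma Gamma_spec x : 0 < x -> 0 < Gamma x /\ Un_cv (gauss_seq x) (Gamma x).
Proof.
  intros Hx. destruct (gauss_cv x Hx) as [l [Hl Hc]].
  assert (H : Un_cv (gauss_seq x) (Gamma x)).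
  { unfold Gamma. apply epsilon_spec. eauto. }
  split; auto. rewrite (UL_sequence _ _ _ H Hc). auto.
Qed.

Lemma cv_ratio x c : 0 < x -> 0 <= c -> Un_cv (fun n => INR n * x / (x + c + INR n)) x.
Proof.
  intros Hx Hc eps He.
  set (K := 2 * x * (x + c) / eps).
  destruct (archimed K) as [H1 _].
  exists (Z.to_nat (up K)).
  intros n Hn. unfold Rdist.
  assert (HN : K < INR n).
  { apply Rlt_le_trans with (IZR (up K)); auto.
    destruct (Z.lt_ge_cases (up K) 0) as [Hneg|Hpos].
    - apply Rle_trans with 0. apply IZR_le; lia. apply pos_INR.
    - rewrite <- (Z2Nat.id (up K)) by lia. rewrite <- INR_IZR_INZ. apply le_INR. lia. }
  assert (HK : 0 <= K).
  { unfold K. apply Rmult_le_pos. apply Rmult_le_pos; lra. left; apply Rinv_0_lt_compat; lra. }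
  assert (HN0 : 0 < INR n) by lra.
  assert (E : INR n * x / (x + c + INR n) - x = - (x * (x + c) / (x + c + INR n))) by (field; lra).
  rewrite E, Rabs_Ropp, Rabs_right.
  2: { apply Rle_ge, Rmult_le_pos. apply Rmult_le_pos; lra. left; apply Rinv_0_lt_compat; lra. }
  apply Rmult_lt_reg_r with (x + c + INR n); [lra|].
  unfold Rdiv. rewrite Rmult_assoc, Rinv_l, Rmult_1_r by lra.
  unfold K, Rdiv in HN. apply Rmult_lt_compat_r with (r := eps) in HN; auto.
  rewrite Rmult_assoc, Rinv_l, Rmult_1_r in HN by lra.
  nra.
Qed.

Lemma Gamma_succ x : 0 < x -> Gamma (x + 1) = x * Gamma x.
Proof.
  intros Hx. destruct (Gamma_spec x Hx) as [_ H1].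
  destruct (Gamma_spec (x + 1) ltac:(lra)) as [_ H2].
  assert (H3 : Un_cv (gauss_seq (x + 1)) (Gamma x * x)).
  { eapply cv_eventually; [|apply CV_mult; [exact H1 | apply (cv_ratio x 1 Hx ltac:(lra))]].
    intros n Hn. unfold gauss_seq, Rpower.
    assert (HP : x * prod_f_R0 (fun i => x + 1 + INR i) n =
                 prod_f_R0 (fun i => x + INR i) n * (x + INR (S n))).
    { clear Hn. induction n.
      - simpl. ring.
      - change (prod_f_R0 (fun i => x + 1 + INR i) (S n)) with
          (prod_f_R0 (fun i => x + 1 + INR i) n * (x + 1 + INR (S n))).
        change (prod_f_R0 (fun i => x + INR i) (S n)) with
          (prod_f_R0 (fun i => x + INR i) n * (x + INR (S n))).
        rewrite <- Rmult_assoc, IHn. rewrite !S_INR. ring. }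
    assert (0 < INR n) by (apply lt_0_INR; lia).
    rewrite Rmult_plus_distr_r, Rmult_1_l, exp_plus, exp_ln by auto.
    pose proof (prod_pos x n Hx). pose proof (prod_pos (x+1) n ltac:(lra)).
    assert (HP' : prod_f_R0 (fun i => x + 1 + INR i) n = prod_f_R0 (fun i => x + INR i) n * (x + INR (S n)) / x)
      by (rewrite <- HP; field; lra).
    rewrite HP'. rewrite S_INR in *. field. repeat split; lra. }
  rewrite (UL_sequence _ _ _ H2 H3). ring.
Qed.

Lemma Gamma_1 : Gamma 1 = 1.
Proof.
  destruct (Gamma_spec 1 ltac:(lra)) as [_ H].
  assert (H2 : Un_cv (gauss_seq 1) 1).
  { eapply cv_eventually; [|apply (cv_ratio 1 0 ltac:(lra) ltac:(lra))].
    intros n Hn. unfold gauss_seq. rewrite Rpower_1 by (apply lt_0_INR; lia).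
    assert (HP : forall m, prod_f_R0 (fun i => 1 + INR i) m = INR (fact (S m))).
    { induction m. simpl; ring.
      change (prod_f_R0 (fun i => 1 + INR i) (S m)) with
          (prod_f_R0 (fun i => 1 + INR i) m * (1 + INR (S m))).
      rewrite IHm. rewrite (fact_simpl (S m)), mult_INR, (S_INR (S m)). ring. }
    rewrite HP, fact_simpl, mult_INR, S_INR.
    pose proof (lt_0_INR _ (lt_O_fact n)). pose proof (pos_INR n). field. split; lra. }
  exact (UL_sequence _ _ _ H H2).
Qed.

Fixpoint cc (x : R) (n : nat) : R :=
  match n with O => 1 | S m => cc x m * (x + INR m) / INR (S m) end.

Lemma ccS_R x n : INR (S n) * cc x (S n) = (x + INR n) * cc x n.
Proof. cbn [cc]. field. apply not_0_INR. discriminate. Qed.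

Lemma cc_Gamma x n : 0 < x -> / Gamma x * (Gamma (INR n + x) / Gamma (INR n + 1)) = cc x n.
Proof.
  intros Hx. induction n.
  - simpl INR. rewrite !Rplus_0_l, Gamma_1. destruct (Gamma_spec x Hx) as [Hg _].
    simpl. field. lra.
  - rewrite S_INR.
    assert (H1 : 0 < INR n + x) by (pose proof (pos_INR n); lra).
    assert (H2 : 0 < INR n + 1) by (pose proof (pos_INR n); lra).
    replace (INR n + 1 + x) with ((INR n + x) + 1) by ring.
    rewrite Gamma_succ, (Gamma_succ (INR n + 1)) by lra.
    cbn [cc]. rewrite <- IHn. rewrite S_INR.
    destruct (Gamma_spec x Hx) as [G1 _].
    destruct (Gamma_spec _ H1) as [G2 _].
    destruct (Gamma_spec _ H2) as [G3 _].
    field. repeat split; lra.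
Qed.

Lemma fall_term a x k j : (j <= k)%nat -> 0 < x ->
  / Gamma x * falling ((a + INR k) + x - Defs.sigma (a + INR j)) (x - 1) = cc x (k - j).
Proof.
  intros Hj Hx. unfold falling, Defs.sigma. rewrite <- cc_Gamma by auto.
  rewrite minus_INR by auto.
  replace (a + INR k + x - (a + INR j + 1) + 1) with (INR k - INR j + x) by ring.
  replace (INR k - INR j + x - (x - 1)) with (INR k - INR j + 1) by ring.
  reflexivity.
Qed.

Lemma rise_term a x k j : (j <= k)%nat -> 0 < x ->
  / Gamma x * rising ((a + INR k) - Defs.rho (a + INR j)) (x - 1) = cc x (k - j).
Proof.
  intros Hj Hx. unfold rising, Defs.rho. rewrite <- cc_Gamma by auto.
  rewrite minus_INR by auto.
  replace (a + INR k - (a + INR j - 1) + (x - 1)) with (INR k - INR j + x) by ring.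
  replace (a + INR k - (a + INR j - 1)) with (INR k - INR j + 1) by ring.
  reflexivity.
Qed.

Lemma mix_id g A B C D : g*(g*A+(1-g)*B)+(1-g)*(g*C+(1-g)*D) = g*(g*A+(1-g)*C)+(1-g)*(g*B+(1-g)*D).
Proof. ring. Qed.

From mathcomp Require Import all_boot all_algebra.
From mathcomp Require Import Rstruct.
Import GRing.Theory Num.Theory.
Local Open Scope ring_scope.
From mathcomp Require Import ring.

Lemma sumE (F : nat -> R) k : sum_f_R0 F k = \sum_(j < k.+1) F j.
Proof.
  elim: k => [|k IH]; first by rewrite big_ord_recr big_ord0 /= add0r.
  by rewrite big_ord_recr /= -IH.
Qed.

Definition conv (u v : nat -> R) (k : nat) : R := \sum_(j < k.+1) u (k - j)%N * v j.

Lemma conv_assoc u v g k : conv u (conv v g) k = conv (conv u v) g k.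
Proof.
  rewrite /conv.
  transitivity (\sum_(j < k.+1) \sum_(i < k.+1 | (i <= j)%N) u (k - j)%N * (v (j - i)%N * g i)).
    apply: eq_bigr => j _. rewrite big_distrr /=.
    rewrite (big_ord_widen k.+1 (fun i => u (k - j)%N * (v (j - i)%N * g i))) //.
  under eq_bigr do rewrite big_mkcond.
  rewrite exchange_big /=. apply: eq_bigr => i _.
  rewrite -big_mkcond /= big_distrl /=.
  have := big_geq_mkord (idx := 0) (op := +%R) i k.+1 xpredT
     (fun j => u (k - j)%N * (v (j - i)%N * g i)).
  rewrite /= => <-.
  rewrite -{1}(add0n i) big_addn big_mkord.
  have -> : (k.+1 - i = (k - i).+1)%N by rewrite subSn // -ltnS.
  apply: eq_bigr => j _. rewrite addnK mulrA. congr (u _ * _ * _).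
  by rewrite addnC subnDA.
Qed.



Lemma ccS x n : n.+1%:R * cc x n.+1 = (x + n%:R) * cc x n.
Proof. rewrite -!INRE. exact: ccS_R. Qed.

Lemma vdm x y n : conv (cc x) (cc y) n = cc (x + y) n.
Proof.
  elim: n => [|n IH].
    by rewrite /conv big_ord_recr big_ord0 /= add0r mulr1.
  apply: (mulfI (x := n.+1%:R)); first by rewrite pnatr_eq0.
  rewrite ccS -IH /conv.
  have A : \sum_(m < n.+2) (n.+1 - m)%:R * cc x (n.+1 - m) * cc y m
         = \sum_(m < n.+1) (x + (n - m)%:R) * cc x (n - m) * cc y m.
    rewrite big_ord_recr /= subnn mul0r mul0r addr0.
    apply: eq_bigr => m _ /=. rewrite subSn; last by rewrite -ltnS.
    by rewrite ccS.
  have B : \sum_(m < n.+2) m%:R * cc x (n.+1 - m) * cc y m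
         = \sum_(m < n.+1) (y + m%:R) * cc x (n - m) * cc y m.
    rewrite big_ord_recl (_ : (nat_of_ord (@ord0 n.+1))%:R = 0 :> R) // !mul0r add0r.
    apply: eq_bigr => m _. rewrite (_ : nat_of_ord (lift ord0 m) = m.+1) // subSS.
    have := ccS y m. move=> h.
    have -> : m.+1%:R * cc x (n - m) * cc y m.+1 = cc x (n - m) * (m.+1%:R * cc y m.+1) by ring.
    rewrite h. ring.
  transitivity (\sum_(m < n.+2) (n.+1 - m)%:R * cc x (n.+1 - m) * cc y m
              + \sum_(m < n.+2) m%:R * cc x (n.+1 - m) * cc y m).
    rewrite big_distrr -big_split /=. apply: eq_bigr => m _.
    have hm : (m <= n.+1)%N by rewrite -ltnS.
    rewrite -{1}(subnK hm) natrD. ring.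
  rewrite A B -big_split big_distrr /=. apply: eq_bigr => m _.
  have hm : (m <= n)%N by rewrite -ltnS.
  rewrite natrB // RplusE. ring.
Qed.

Lemma DeltaE a x g k : Rlt 0 x -> DeltaInv a x g k = conv (cc x) g k.
Proof.
  move=> Hx. rewrite /DeltaInv sumE RmultE big_distrr /conv. apply: eq_bigr => j _.
  rewrite -(fall_term a x k j) //; last by apply/leP; rewrite -ltnS.
  symmetry. exact: Rmult_assoc.
Qed.

Lemma NablaE a x g k : Rlt 0 x -> NablaInv a x g k = conv (cc x) g k.
Proof.
  move=> Hx. rewrite /NablaInv sumE RmultE big_distrr /conv. apply: eq_bigr => j _.
  rewrite -(rise_term a x k j) //; last by apply/leP; rewrite -ltnS.
  symmetry. exact: Rmult_assoc.
Qed.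

Lemma conv_ext u g1 g2 k : (forall i, g1 i = g2 i) -> conv u g1 k = conv u g2 k.
Proof. move=> h. rewrite /conv. apply: eq_bigr => j _. by rewrite h. Qed.

Lemma conv_lin u c1 c2 g1 g2 k :
  conv u (fun i => c1 * g1 i + c2 * g2 i) k = c1 * conv u g1 k + c2 * conv u g2 k.
Proof.
  rewrite /conv !big_distrr -big_split /=. apply: eq_bigr => j _. ring.
Qed.

Lemma TT x y g k : conv (cc x) (conv (cc y) g) k = conv (cc (x + y)) g k.
Proof. rewrite conv_assoc. apply: eq_bigr => j _. by rewrite vdm. Qed.

Lemma diamondE gam a x y g k : Rlt 0 x -> Rlt 0 y ->
  diamond gam a x y g k = gam * conv (cc x) g k + (1 - gam) * conv (cc y) g k.
Proof. move=> hx hy. by rewrite /diamond DeltaE // NablaE. Qed.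


Close Scope ring_scope.
Open Scope R_scope.

Theorem mainTheorem14 (a gam : R) (f : nat -> R) (alpha1 alpha2 beta1 beta2 : R) :
  0 <= gam <= 1 ->
  0 < alpha1 -> 0 < alpha2 -> 0 < beta1 -> 0 < beta2 ->
  forall k : nat,
    diamond gam a alpha1 beta1 (diamond gam a alpha2 beta2 f) k =
    gam * diamond gam a (alpha1 + alpha2) (beta1 + alpha2) f k
    + (1 - gam) * diamond gam a (alpha1 + beta2) (beta1 + beta2) f k.
Proof.
  intros _ h1 h2 h3 h4 k.
  have hD : forall i, diamond gam a alpha2 beta2 f i =
     (gam * conv (cc alpha2) f i + (1 - gam) * conv (cc beta2) f i)%R.
    by move=> i; rewrite diamondE.
  rewrite diamondE // !(conv_ext _ _ _ _ hD).
  rewrite !conv_lin !TT.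
  rewrite (diamondE _ _ (alpha1 + alpha2)); try (apply Rplus_lt_0_compat; assumption).
  rewrite (diamondE _ _ (alpha1 + beta2)); try (apply Rplus_lt_0_compat; assumption).
  apply: mix_id.
Qed.
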